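(* Let $q,n,d$ be positive integers with $q\ge2$ and $qd=(q-1)n$. Then for every code $C\subseteq[q]^n$ with $|C|=qn-1$ and minimum Hamming distance at least $d$, there exists $u\in[q]^n\setminus C$ such that $C\cup\{u\}$ has minimum Hamming distance at least $d$.
   Context: $[q]=\{0,\dots,q-1\}$; the Hamming distance of two words is the number of coordinates in which they differ; the minimum distance of a code is the minimum Hamming distance between distinct codewords. *)

(* Defs.v *)
From mathcomp Require Import all_boot.
Set Implicit Arguments. Unset Strict Implicit. Unset Printing Implicit Defensive.

Definition word (q n : nat) := {ffun 'I_n -> 'I_q}.

Definition hamming (q n : nat) (x y : word q n) : nat :=
  #|[set i : 'I_n | x i != y i]|.

Definition min_dist_ge (q n : nat) (C : {set word q n}) (d : nat) : Prop :=
  forall x y, x \in C -> y \in C -> x != y -> d <= hamming x y.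

(* Main.v *)
Set Implicit Arguments. Unset Strict Implicit. Unset Printing Implicit Defensive.
Require Import Defs.
From mathcomp Require Import all_boot all_order all_algebra zify ring.
Import Order.TTheory GRing.Theory Num.Theory.
Lemma sqdev q (f : 'I_q -> nat) (a b : int) :
 (\sum_(c < q) (a * (f c)%:R - b)^+2 = a^+2 * (\sum_(c<q) f c ^ 2)%:R
    - 2 * a * b * (\sum_(c<q) f c)%:R + q%:R * b^+2 :> int)%R.
Proof.
rewrite !natr_sum mulr_sumr mulr_sumr -sumrB.
have -> : (q%:R * b ^+ 2 = \sum_(c < q) b ^+ 2 :> int)%R by rewrite sumr_const card_ord mulr_natl.
rewrite -big_split /=; apply eq_bigr => c _; rewrite natrX; ring.
Qed.
Lemma cs q (f : 'I_q -> nat) : 0 < q -> (\sum_(c<q) f c) ^ 2 <= q * \sum_(c<q) f c ^ 2.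
Proof.
move=> q0.
have := @sqdev q f (q%:R)%R ((\sum_(c<q) f c)%:R)%R.
set S := (\sum_(c<q) f c ^ 2). set k := \sum_(c<q) f c.
move=> E.
have : (0 <= \sum_(c < q) (q%:R * (f c)%:R - k%:R)^+2 :> int)%R by apply: sumr_ge0 => c _; exact: sqr_ge0.
rewrite E. nia.
Qed.

Lemma card_pred_sum (T : finType) (P : pred T) : #|[set x | P x]| = \sum_x (P x : nat).
Proof. by rewrite -sum1_card big_mkcond /=; apply: eq_bigr => x _; rewrite inE; case: (P x). Qed.

Lemma card_in_sum (T : finType) (K : {set T}) (P : pred T) :
  #|[set x in K | P x]| = \sum_(x in K) (P x : nat).
Proof.
rewrite -sum1_card big_mkcond [RHS]big_mkcond /=; apply: eq_bigr => x _.
by rewrite inE; case: (x \in K); case: (P x).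
Qed.

Lemma sum_tight_ge (I : finType) (A : {set I}) (F : I -> nat) m :
  (forall i, i \in A -> m <= F i) -> \sum_(i in A) F i <= #|A| * m ->
  forall i, i \in A -> F i = m.
Proof.
move=> hF hs.
have E : \sum_(i in A) F i = \sum_(i in A) (F i - m) + #|A| * m.
  rewrite -sum_nat_const -big_split /=; apply: eq_bigr => i /hF; lia.
have : \sum_(i in A) (F i - m) == 0 by lia.
rewrite sum_nat_eq0 => /forall_inP H i iA; have := H i iA; have := hF i iA; lia.
Qed.

Lemma sum_tight_le (I : finType) (A : {set I}) (F : I -> nat) m :
  (forall i, i \in A -> F i <= m) -> #|A| * m <= \sum_(i in A) F i ->
  forall i, i \in A -> F i = m.
Proof.
move=> hF hs.
have E : #|A| * m = \sum_(i in A) (m - F i) + \sum_(i in A) F i.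
  rewrite -sum_nat_const -big_split /=; apply: eq_bigr => i /hF; lia.
have : \sum_(i in A) (m - F i) == 0 by lia.
rewrite sum_nat_eq0 => /forall_inP H i iA; have := H i iA; have := hF i iA; lia.
Qed.

Section Words.
Variables q n : nat.
Implicit Types x y z u : word q n.

Definition agr x y := #|[set j : 'I_n | x j == y j]|.
Definition cnt (K : {set word q n}) (j : 'I_n) (c : 'I_q) := #|[set x in K | x j == c]|.

Lemma ham_agr x y : hamming x y + agr x y = n.
Proof.
rewrite /agr; have -> : [set j : 'I_n | x j == y j] = setC [set j | x j != y j].
  by apply/setP => j; rewrite !inE negbK.
by rewrite /hamming cardsC card_ord.
Qed.

Lemma ham_sym x y : hamming x y = hamming y x.
Proof. by rewrite /hamming; apply: eq_card => j; rewrite !inE eq_sym. Qed.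

Lemma agr_refl x : agr x x = n.
Proof. by rewrite /agr (_ : [set j | x j == x j] = setT) ?cardsT ?card_ord //; apply/setP=> j; rewrite !inE eqxx. Qed.

Lemma row (K : {set word q n}) y : \sum_(z in K) agr y z = \sum_j cnt K j (y j).
Proof.
rewrite /agr; under eq_bigr do rewrite card_pred_sum.
rewrite exchange_big /=; apply: eq_bigr => j _; rewrite /cnt card_in_sum.
by apply: eq_bigr => z _; rewrite eq_sym.
Qed.

Lemma col (K : {set word q n}) j :
  \sum_(y in K) cnt K j (y j) = \sum_c cnt K j c ^ 2.
Proof.
have E y : cnt K j (y j) = \sum_c ((y j == c) * cnt K j c).
  rewrite (bigD1 (y j)) //= eqxx mul1n big1 ?addn0 // => c.
  by rewrite eq_sym => /negbTE ->.
under eq_bigr do rewrite E.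
rewrite exchange_big /=; apply: eq_bigr => c _.
by rewrite -big_distrl /= -card_in_sum /cnt mulnn.
Qed.

Lemma part (A : {set word q n}) i : \sum_a #|[set x in A | x i == a]| = #|A|.
Proof.
under eq_bigr do rewrite card_in_sum.
rewrite exchange_big /= -sum1_card; apply: eq_bigr => x _.
rewrite (bigD1 (x i)) //= eqxx big1 // => c /negbTE.
by rewrite eq_sym => ->.
Qed.

End Words.

Lemma agr_sym q n (x y : word q n) : agr x y = agr y x.
Proof. by rewrite /agr; apply: eq_card => j; rewrite !inE eq_sym. Qed.

Lemma sum_neq_const (T : finType) (i : T) c : \sum_(j | j != i) c = #|T|.-1 * c.
Proof. by rewrite -(cardC1 i) -sum_nat_const; apply: eq_bigl => j; rewrite inE. Qed.

Lemma sum_neq_set (T : finType) (i : T) (F : T -> nat) :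
  \sum_(j | j != i) F j = \sum_(j in [set~ i]) F j.
Proof. by apply: eq_bigl => j; rewrite in_setC1. Qed.

Lemma bal q (f : 'I_q -> nat) t : \sum_c f c = q * t ->
  (q * t * t <= \sum_c f c ^ 2) /\ (\sum_c f c ^ 2 <= q * t * t -> forall c, f c = t).
Proof.
move=> hs.
have E := @sqdev q f 1%R (t%:R)%R.
rewrite hs expr1n mul1r mulr1 in E.
have P : (0 <= \sum_(c < q) (1 * (f c)%:R - t%:R)^+2 :> int)%R
  by apply: sumr_ge0 => c _; exact: sqr_ge0.
split; first by move: P; rewrite E expr2 ?natz; set S := (\sum_(c < q) f c ^ 2); nia.
move=> hle.
have Z : (\sum_(c < q) (1 * (f c)%:R - t%:R)^+2 = 0 :> int)%R.
  apply/eqP; rewrite eq_le P andbT E expr2 ?natz; set S := (\sum_(c < q) f c ^ 2); have hle2 : S <= q * t * t := hle; nia.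
move=> c; have := psumr_eq0P (fun c _ => sqr_ge0 (1 * (f c)%:R - t%:R)%R) Z (i := c) isT.
move/eqP; rewrite sqrf_eq0 mul1r subr_eq0 => /eqP; lia.
Qed.

Section Main.
Variables q n d : nat.
Hypotheses (q0 : 0 < q) (n0 : 0 < n) (d0 : 0 < d) (q2 : 2 <= q) (hqd : q * d = (q - 1) * n).
Variable C : {set word q n}.
Hypotheses (hC : #|C| = q * n - 1) (hmin : min_dist_ge C d).

Let t := n - d.
Lemma dn : d <= n. Proof. nia. Qed.
Lemma qt : q * t = n. Proof. have := dn; rewrite /t; nia. Qed.
Lemma t0 : 0 < t. Proof. have := qt; nia. Qed.
Lemma tn : t < n. Proof. have := dn; rewrite /t; lia. Qed.

Lemma agr_le y z : y \in C -> z \in C -> y != z -> agr y z <= t.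
Proof. move=> yC zC yz; have := hmin yC zC yz; have := ham_agr y z; rewrite /t; lia. Qed.

Definition K i a := [set x in C | x i == a].

Lemma Sbound (E : {set word q n}) y : E \subset C -> y \in E ->
  \sum_(z in E) agr y z <= n + (#|E| - 1) * t.
Proof.
move=> sEC yE; rewrite (bigD1 y) //= agr_refl leq_add2l.
apply: leq_trans (_ : \sum_(z in E :\ y) t <= _).
  rewrite [X in _ <= X](eq_bigl (fun z => (z \in E) && (z != y))); last first.
    by move=> z; rewrite !inE andbC.
  apply: leq_sum => z /andP [zE zy]; apply: agr_le; first exact: (subsetP sEC).
  - exact: (subsetP sEC).
  - by rewrite eq_sym.
by rewrite sum_nat_const (cardsD1 y E) yE /= add1n subn1 /=.
Qed.

Lemma Qid (E : {set word q n}) :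
  \sum_(y in E) \sum_(z in E) agr y z = \sum_j \sum_c cnt E j c ^ 2.
Proof.
under eq_bigr do rewrite row.
rewrite exchange_big /=; apply: eq_bigr => j _; exact: col.
Qed.

Lemma Qbound (E : {set word q n}) : E \subset C ->
  \sum_j \sum_c cnt E j c ^ 2 <= #|E| * (n + (#|E| - 1) * t).
Proof.
move=> sEC; rewrite -Qid -sum_nat_const; apply: leq_sum => y yE; exact: Sbound.
Qed.

Lemma cntK i a : \sum_c cnt (K i a) i c ^ 2 = #|K i a| ^ 2.
Proof.
rewrite (bigD1 a) //= big1 ?addn0.
  rewrite /cnt; congr (_ ^ 2); apply: eq_card => x; rewrite !inE.
  by case: (x i == a); rewrite ?andbT ?andbF.
move=> c ca; rewrite /cnt (_ : [set x in K i a | x i == c] = set0) ?cards0 //.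
apply/setP => x; rewrite !inE.
apply/negbTE/negP => /andP [/andP [_ /eqP ->]]; by rewrite eq_sym (negbTE ca).
Qed.

Lemma KsubC i a : K i a \subset C.
Proof. by apply/subsetP => x; rewrite inE => /andP []. Qed.

Lemma partK (E : {set word q n}) j : \sum_c cnt E j c = #|E|.
Proof. exact: part. Qed.

Lemma class_le i a : #|K i a| <= n.
Proof.
set k := #|K i a|.
have Q1 := Qbound (KsubC i a).
have CSj j : k ^ 2 <= q * \sum_c cnt (K i a) j c ^ 2.
  by rewrite /k -(partK (K i a) j); exact: cs.
have H2 : q * k ^ 2 + (n - 1) * k ^ 2 <= q * \sum_j \sum_c cnt (K i a) j c ^ 2.
  rewrite (bigD1 i) //= cntK mulnDr leq_add2l big_distrr /=.
  apply: leq_trans (_ : \sum_(j | j != i) k ^ 2 <= _).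
    by rewrite sum_neq_const card_ord subn1.
  exact: leq_sum.
have [->|kp] := posnP k; first done.
have H3 : k * (q * k + (n - 1) * k) <= k * (q * (n + (k - 1) * t)).
  have H4 := leq_trans H2 (leq_mul (leqnn q) Q1).
  rewrite !expnS expn0 !muln1 in H4.
  move: H4; set m := n - 1; set r := n + (k - 1) * t.
  rewrite mulnDr !mulnA -/k (mulnC k q) (mulnC k m); exact.
rewrite leq_pmul2l // in H3.
have e1 : q * (n + (k - 1) * t) = q * n + (k * n - n).
  by rewrite mulnDr mulnCA qt mulnBl mul1n.
rewrite e1 mulnBl mul1n in H3.
have f1 : k <= n * k by rewrite leq_pmull.
have f2 : n <= k * n by rewrite leq_pmull.
have f3 : (q - 1) * k <= (q - 1) * n.
  rewrite !mulnBl !mul1n; move: H3 f1 f2; rewrite (mulnC k n); lia.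
by rewrite leq_pmul2l in f3; [|lia].
Qed.

Lemma sumK i : \sum_a #|K i a| = q * n - 1.
Proof. by rewrite -hC -(part C i). Qed.

Lemma sizes i : exists b, #|K i b| = n - 1 /\ forall a, a != b -> #|K i a| = n.
Proof.
have [/existsP [b hb] | hall] := boolP [exists b, #|K i b| < n]; last first.
  exfalso; move: (sumK i).
  rewrite (eq_bigr (fun _ => n)); last first.
    move=> a _; apply/eqP; rewrite eqn_leq class_le /=.
    by move/existsPn: hall => /(_ a); rewrite -leqNgt.
  rewrite sum_nat_const card_ord; lia.
exists b.
have {}hb : #|K i b| < n := hb.
have S := sumK i; rewrite (bigD1 b) //= sum_neq_set in S.
have cardA : #|[set~ b]| = q - 1 by rewrite cardsC1 card_ord subn1.
have all_n : forall a, a \in [set~ b] -> #|K i a| = n.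
  apply: sum_tight_le => [a _|]; first exact: class_le.
  rewrite cardA mulnBl mul1n.
  set s := (X in _ <= X); have S' : #|K i b| + s = q * n - 1 := S.
  have : n <= q * n by rewrite leq_pmull.
  lia.
split; last by move=> a ab; apply: all_n; rewrite in_setC1.
move: S; rewrite (eq_bigr (fun _ => n)) // sum_nat_const cardA mulnBl mul1n.
have : n <= q * n by rewrite leq_pmull.
move=> h1 S'; have S2 : #|K i b| + (q * n - n) = q * n - 1 := S'.
lia.
Qed.

Lemma balance i a : #|K i a| = n -> forall j, j != i -> forall c, cnt (K i a) j c = t.
Proof.
move=> hE j ji.
have Q1 := Qbound (KsubC i a).
rewrite (bigD1 i) //= cntK hE sum_neq_set in Q1.
have colsum j' : \sum_c cnt (K i a) j' c = q * t by rewrite partK hE qt.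
have hS : forall j', j' \in [set~ i] -> \sum_c cnt (K i a) j' c ^ 2 = q * t * t.
  apply: sum_tight_ge => [j' _|]; first exact: (bal (colsum j')).1.
  rewrite cardsC1 card_ord qt.
  set X := (X in X <= _).
  have Q1' : n ^ 2 + X <= n * (n + (n - 1) * t) := Q1.
  rewrite mulnDr (mulnCA n.-1) -subn1 (expnS n) expn1 in Q1' *; lia.
have := hS j; rewrite in_setC1 ji => /(_ isT) hj.
by apply: (bal (colsum j)).2; rewrite hj.
Qed.

Lemma deficit (b : 'I_n -> 'I_q)
  (hb : forall i, #|K i (b i)| = n - 1 /\ forall a, a != b i -> #|K i a| = n)
  i j : j != i -> forall c, cnt (K i (b i)) j c = t - (c == b j).
Proof.
move=> ji c.
have P : \sum_a cnt (K i a) j c = #|K j c|.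
  rewrite -(part (K j c) i); apply: eq_bigr => a _; rewrite /cnt; apply: eq_card => x.
  by rewrite !inE; case: (x \in C); case: (x j == c); case: (x i == a).
rewrite (bigD1 (b i)) //= (eq_bigr (fun _ => t)) in P; last first.
  by move=> a ab; apply: (balance ((hb i).2 a ab) ji c).
rewrite sum_neq_const card_ord -subn1 mulnBl mul1n qt in P.
have := t0; have := tn; move: P.
case: (eqVneq c (b j)) => [->|cb].
  by rewrite (hb j).1; lia.
by rewrite ((hb j).2 c cb); lia.
Qed.

Lemma n2 : 2 <= n.
Proof. have := qt; have := t0; have := q2; nia. Qed.

Lemma final (b : 'I_n -> 'I_q)
  (hb : forall i, #|K i (b i)| = n - 1 /\ forall a, a != b i -> #|K i a| = n)
  y : y \in C -> agr y [ffun j => b j] <= t.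
Proof.
move=> yC; set u := [ffun j => b j].
have agru z : agr z u = \sum_j (z j == b j).
  by rewrite /agr card_pred_sum; apply: eq_bigr => j _; rewrite ffunE.
case: (pickP [pred i | y i == b i]) => [i /= yi | none]; last first.
  rewrite agru big1 // => j _; by have := none j; rewrite /= => ->.
set E := K i (b i).
have yE : y \in E by rewrite inE yC yi.
have hE : #|E| = n - 1 := (hb i).1.
have Ez z : z \in E -> z i = b i by rewrite inE => /andP [_ /eqP].
have cntEi : cnt E i (b i) = #|E|.
  by apply: eq_card => x; rewrite !inE -andbA andbb.
have lower z : z \in E -> t <= agr z u.
  move=> zE; pose s := \sum_j cnt E j (z j).
  have S : s <= n + (#|E| - 1) * t by rewrite /s -row; exact: Sbound (KsubC i (b i)) zE.
  have key : s + agr z u = n + (n - 1) * t.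
    rewrite /s agru -big_split /= (bigD1 i) //= (Ez z zE) cntEi hE eqxx.
    rewrite (eq_bigr (fun _ => t)); last first.
      move=> j ji; rewrite (deficit hb ji) subnK //.
      exact: leq_trans (leq_b1 _) t0.
    rewrite sum_neq_const card_ord; have := n0; lia.
  have e : (n - 1) * t = (n - 1 - 1) * t + t.
    by rewrite -mulSnr; congr (_ * _); have := n2; lia.
  move: S key; rewrite hE e; lia.
have upper : \sum_(z in E) agr z u <= #|E| * t.
  under eq_bigr do rewrite agr_sym.
  rewrite row (bigD1 i) //= ffunE cntEi.
  rewrite (eq_bigr (fun _ => t - 1)); last first.
    by move=> j ji; rewrite ffunE (deficit hb ji) eqxx.
  rewrite sum_neq_const card_ord hE mulnBr muln1.
  have : n - 1 <= (n - 1) * t by rewrite leq_pmulr // t0.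
  have := n0; lia.
by rewrite (sum_tight_ge (F := fun z => agr z u) lower upper yE).
Qed.

Lemma main : exists u : word q n, u \notin C /\ min_dist_ge (u |: C) d.
Proof.
have [b hb] := fin_all_exists sizes.
exists [ffun j => b j]; set u := [ffun j => b j].
have hu y : y \in C -> d <= hamming y u.
  move=> yC; have h1 : agr y u <= t := final hb yC.
  have := ham_agr y u; move: h1; rewrite /t; have := dn; lia.
split.
  apply/negP => uC; have h1 : agr u u <= t := final hb uC.
  move: h1; rewrite agr_refl; have := tn; lia.
move=> x y; rewrite !in_setU1 => /orP [/eqP -> | xC] /orP [/eqP -> | yC] xy.
- by rewrite eqxx in xy.
- by rewrite ham_sym; exact: hu.
- exact: hu.
- exact: hmin.
Qed.

End Main.

Theorem proposition5p14 (q n d : nat) :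
  0 < q -> 0 < n -> 0 < d -> 2 <= q -> q * d = (q - 1) * n ->
  forall C : {set word q n},
    #|C| = q * n - 1 -> min_dist_ge C d ->
    exists u : word q n, u \notin C /\ min_dist_ge (u |: C) d.
Proof.
move=> q0 n0 d0 q2 hqd C hC hmin; exact: (main q0 n0 d0 q2 hqd hC hmin).
Qed.
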